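(* Let $n\ge 0$ be an integer. Then for every real $r$ with $|r|>1$, $$\int_{-1}^1 \frac{U_n(s)(1-s^2)^{\frac{3}{2}}}{(s-r)^3}\,ds = \frac{\pi}{2}\left[(n^2+2n+3)-3(n+1)\frac{|r|}{\sqrt{r^2-1}}\right]\left(r-\frac{|r|}{r}\sqrt{r^2-1}\right)^{n+1}.$$
   Context: $U_k(s)=\frac{\sin((k+1)\cos^{-1}s)}{\sin(\cos^{-1}s)}$ is the Tchebyshev polynomial of the second kind. Since $|r|>1$, the integral is an ordinary (nonsingular) integral. *)

(* Defs.v *)
From Stdlib Require Import Reals.
From Coquelicot Require Import Coquelicot.
Open Scope R_scope.

(* Chebyshev polynomial of the second kind, defined as in the paper:
   U_k(s) = sin((k+1) acos s) / sin(acos s).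
   (At s = +-1 the denominator is 0; Stdlib's total division gives some
   value there, which is irrelevant for the integral below since the
   integrand carries the factor (1-s^2)^(3/2) and endpoint values do not
   affect Riemann integrals.) *)
Definition chebU (k : nat) (s : R) : R :=
  sin (INR (k + 1) * acos s) / sin (acos s).

Definition integrand (n : nat) (r s : R) : R :=
  chebU n s * ((1 - s ^ 2) * sqrt (1 - s ^ 2)) / (s - r) ^ 3.

(* Main.v *)
Require Import Defs.
From Stdlib Require Import Reals Lra Lia Psatz.
From Coquelicot Require Import Coquelicot.
Open Scope R_scope.

Lemma is_RInt_lin (f g : R -> R) a b If Ig (al be l : R) :
  is_RInt f a b If -> is_RInt g a b Ig -> l = al*If + be*Ig ->
  is_RInt (fun x => al * f x + be * g x) a b l.
Proof.
  intros Hf Hg ->.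
  exact (is_RInt_plus _ _ a b _ _ (is_RInt_scal _ a b al _ Hf) (is_RInt_scal _ a b be _ Hg)).
Qed.

Lemma is_RInt_derive_R (f df : R -> R) a b l :
  (forall x, Rmin a b <= x <= Rmax a b -> is_derive f x (df x)) ->
  (forall x, Rmin a b <= x <= Rmax a b -> continuous df x) ->
  l = f b - f a -> is_RInt df a b l.
Proof. intros H1 H2 ->. exact (is_RInt_derive f df a b H1 H2). Qed.

Definition Dp (p t : R) := 1 - 2*p*cos t + p^2.

Lemma Dp_pos p t : Rabs p < 1 -> 0 < Dp p t.
Proof.
  intros Hp; unfold Dp. destruct (COS_bound t).
  destruct (Rabs_def2 _ _ Hp). destruct (Rle_lt_dec 0 p).
  - assert (0 <= p*(1 - cos t)) by (apply Rmult_le_pos; lra). nra.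
  - assert (0 <= (-p)*(1 + cos t)) by (apply Rmult_le_pos; lra). nra.
Qed.

Lemma sin_INR_PI k : sin (INR k * PI) = 0.
Proof.
  induction k. simpl. rewrite Rmult_0_l; apply sin_0.
  rewrite S_INR, Rmult_plus_distr_r, Rmult_1_l, neg_sin, IHk; ring.
Qed.

Lemma M0 p : Rabs p < 1 -> is_RInt (fun t => / Dp p t) 0 PI (PI / (1 - p^2)).
Proof.
  intros Hp. destruct (Rabs_def2 _ _ Hp).
  assert (Hc : forall t, 0 < 1 - p * cos t).
  { intro t; destruct (COS_bound t). destruct (Rle_lt_dec 0 p).
    - assert (p * cos t <= p) by (rewrite <- (Rmult_1_r p) at 2; apply Rmult_le_compat_l; lra). lra.
    - assert (p * cos t <= -p) by nra. lra. }
  set (F := fun t => (t + 2 * atan (p * sin t / (1 - p * cos t))) / (1 - p^2)).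
  replace (PI / (1 - p^2)) with (minus (F PI) (F 0)).
  2:{ unfold F, minus, plus, opp; simpl. rewrite sin_PI, sin_0. 
      replace (p*0/(1 - p* cos PI)) with 0 by (field; rewrite cos_PI; nra).
      replace (p*0/(1 - p* cos 0)) with 0 by (field; rewrite cos_0; nra).
      rewrite atan_0. field. nra. }
  apply (is_RInt_derive F).
  - intros t _. unfold F. auto_derive.
    + specialize (Hc t). lra.
    + pose proof (Hc t). pose proof (Dp_pos p t Hp). unfold Dp in *.
      pose proof (sin2_cos2 t) as Hsc. unfold Rsqr in Hsc.
      field_simplify_eq.
      * replace (sin t ^ 2) with (1 - cos t ^2) by nra; ring.
      * repeat split; nra.
  - intros t _. apply (ex_derive_continuous (fun u => / Dp p u)). pose proof (Dp_pos p t Hp). unfold Dp in *; auto_derive. lra.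
Qed.

Lemma is_RInt_lin3 (f g h : R -> R) a b If Ig Ih (al be ga l : R) :
  is_RInt f a b If -> is_RInt g a b Ig -> is_RInt h a b Ih -> l = al*If + be*Ig + ga*Ih ->
  is_RInt (fun x => al * f x + be * g x + ga * h x) a b l.
Proof.
  intros Hf Hg Hh ->.
  eapply is_RInt_ext.
  2: apply (is_RInt_lin (fun x => al * f x + be * g x) h a b (al*If + be*Ig) Ih 1 ga); auto.
  - intros; simpl; ring.
  - apply (is_RInt_lin f g a b If Ig al be); auto.
  - ring.
Qed.

Lemma cosm0 m : m <> 0 -> sin (m * PI) = 0 -> is_RInt (fun t => cos (m * t)) 0 PI 0.
Proof.
  intros Hk Hs.
  apply (is_RInt_derive_R (fun t => sin (m * t) / m)).
  3:{ rewrite Hs, Rmult_0_r, sin_0. field. exact Hk. }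
  - intros t _. auto_derive. auto. field. auto.
  - intros t _. apply (ex_derive_continuous (fun u => cos (m * u))). auto_derive. auto.
Qed.

Lemma cosS0 k : is_RInt (fun t => cos (INR (S k) * t)) 0 PI 0.
Proof.
  apply cosm0. apply not_0_INR; lia. apply sin_INR_PI.
Qed.

Lemma cos_rec k t : cos (INR (S (S k)) * t) = 2 * cos (INR (S k) * t) * cos t - cos (INR k * t).
Proof.
  replace (INR (S (S k)) * t) with (INR (S k) * t + t) by (rewrite (S_INR (S k)); ring).
  replace (INR k * t) with (INR (S k) * t - t) by (rewrite (S_INR k); ring).
  rewrite cos_plus, cos_minus. ring.
Qed.

Lemma Mk p : p <> 0 -> Rabs p < 1 -> forall k,
  is_RInt (fun t => cos (INR k * t) / Dp p t) 0 PI (PI * p^k / (1 - p^2)).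
Proof.
  intros Hp0 Hp.
  destruct (Rabs_def2 _ _ Hp).
  assert (Hq : 1 - p^2 <> 0) by nra.
  assert (Hc1 : is_RInt (fun _ => 1) 0 PI PI).
  { pose proof (is_RInt_const 0 PI 1) as H1. unfold scal in H1; simpl in H1.
    unfold mult in H1; simpl in H1. assert (E : (PI - 0) * 1 = PI) by ring. rewrite E in H1. exact H1. }
  assert (forall k, is_RInt (fun t => cos (INR k * t) / Dp p t) 0 PI (PI * p^k / (1 - p^2)) /\
                    is_RInt (fun t => cos (INR (S k) * t) / Dp p t) 0 PI (PI * p^(S k) / (1 - p^2))).
  { induction k.
    - split.
      + eapply is_RInt_ext. 2: { pose proof (M0 p Hp). replace (PI * p^0/(1-p^2)) with (PI/(1-p^2)) by (simpl; field; intro; nra). exact H1. }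
        intros t _. simpl. rewrite Rmult_0_l, cos_0. field. pose proof (Dp_pos p t Hp). lra.
      + eapply is_RInt_ext.
        2: apply (is_RInt_lin _ _ 0 PI _ _ ((1+p^2)/(2*p)) (-(1/(2*p))) _ (M0 p Hp) Hc1).
        * intros t _. simpl. rewrite Rmult_1_l. pose proof (Dp_pos p t Hp). unfold Dp in *. field. lra.
        * simpl. field. split; [auto| intro; nra].
    - destruct IHk as [IH1 IH2]. split; auto.
      eapply is_RInt_ext.
      2: apply (is_RInt_lin3 _ _ _ 0 PI _ _ _ ((1+p^2)/p) (-(1/p)) (-1) _ IH2 (cosS0 k) IH1).
      + intros t _. rewrite cos_rec. pose proof (Dp_pos p t Hp). unfold Dp in *. match goal with |- ?a = ?b => change (@eq R a b) end. field. split; [apply Rgt_not_eq; exact H1 | auto].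
      + change (p ^ S (S k)) with (p * (p * p^k)). change (p^S k) with (p * p^k). match goal with |- ?a = ?b => change (@eq R a b) end. field. split; auto. }
  intro k; exact (proj1 (H1 k)).
Qed.

Definition Hf (p m t : R) :=
  2 * p^2 * (sin (m * t) * sin t ^ 2) / Dp p t ^ 2
  + p * (m * cos (m * t) * sin t + 2 * sin (m * t) * cos t) / Dp p t.

Definition Gf (p m t : R) := sin (m * t) * sin t ^ 3 / (cos t - (p^2 + 1) / (2 * p)) ^ 3.

Definition gpf (m t : R) := 3 * m * cos (m * t) * cos t - (m^2 + 2) * sin (m * t) * sin t.

Lemma Hf_deriv p m t : p <> 0 -> Rabs p < 1 ->
  is_derive (Hf p m) t (Gf p m t + p * (gpf m t / Dp p t)).
Proof.
  intros Hp0 Hp. pose proof (Dp_pos p t Hp) as HD.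
  assert (HD' : cos t - (p^2 + 1) / (2 * p) <> 0).
  { replace (cos t - (p^2 + 1) / (2 * p)) with (- Dp p t / (2 * p)) by (unfold Dp; field; auto).
    intro E. apply Rmult_integral in E. destruct E as [E|E].
    - lra.
    - apply (Rinv_neq_0_compat (2*p)); [intro; apply Hp0; lra | exact E]. }
  assert (HDn : Dp p t <> 0) by (apply Rgt_not_eq; exact HD).
  unfold Hf, Gf, gpf. unfold Dp in HD. unfold Dp at 1 2 3. auto_derive.
  all: replace (1 + - (2 * p * cos t) + p * (p * 1)) with (Dp p t) by (unfold Dp; ring).
  all: try (repeat split; auto; apply Rmult_integral_contrapositive_currified; auto;
    rewrite Rmult_1_r; auto; fail).
  - replace (cos t - (p^2 + 1) / (2 * p)) with (- Dp p t / (2 * p))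
      by (unfold Dp; match goal with |- ?a = ?b => change (@eq R a b) end; field; auto).
    replace (1 - 2 * p * cos t + p^2) with (Dp p t) by reflexivity.
    match goal with |- ?a = ?b => change (@eq R a b) end. generalize HDn. generalize (Dp p t). intros D HDn0. field. auto.
Qed.

Lemma cosr_nz p t : p <> 0 -> Rabs p < 1 -> cos t - (p^2 + 1) / (2 * p) <> 0.
Proof.
  intros Hp0 Hp. pose proof (Dp_pos p t Hp) as HD.
  replace (cos t - (p^2 + 1) / (2 * p)) with (- Dp p t / (2 * p)) by (unfold Dp; field; auto).
  intro E. apply Rmult_integral in E. destruct E as [E|E].
  - lra.
  - apply (Rinv_neq_0_compat (2*p)); [intro; apply Hp0; lra | exact E].
Qed.

Lemma Gint p n : p <> 0 -> Rabs p < 1 ->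
  is_RInt (Gf p (INR (S n))) 0 PI
    (- p * ((3 * INR (S n) - INR (S n) ^ 2 - 2) / 2 * (PI * p^n / (1 - p^2))
          + (3 * INR (S n) + INR (S n) ^ 2 + 2) / 2 * (PI * p^(S (S n)) / (1 - p^2)))).
Proof.
  intros Hp0 Hp.
  set (m := INR (S n)).
  assert (Hsm : sin (m * PI) = 0) by apply sin_INR_PI.
  assert (HI : is_RInt (fun t => Gf p m t + p * (gpf m t / Dp p t)) 0 PI 0).
  { apply (is_RInt_derive_R (Hf p m)).
    - intros t _. apply Hf_deriv; auto.
    - intros t _. 
      apply (ex_derive_continuous (fun t => Gf p m t + p * (gpf m t / Dp p t))).
      pose proof (Dp_pos p t Hp) as HD.
      pose proof (cosr_nz p t Hp0 Hp) as HD'.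
      unfold Gf, gpf, Dp in *. auto_derive. split.
      { replace (cos t + - ((p * (p * 1) + 1) / (2 * p))) with (cos t - (p^2+1)/(2*p)) by (field; auto).
        rewrite Rmult_1_r; repeat apply prod_neq_R0; auto. }
      split; [ replace (1 + - (2 * p * cos t) + p * (p * 1)) with (1 - 2*p*cos t + p^2) by ring; apply Rgt_not_eq; exact HD | exact I ].
    - unfold Hf. rewrite Hsm, sin_PI, Rmult_0_r, sin_0. 
      rewrite (Rmult_0_r m), sin_0. 
      pose proof (Dp_pos p 0 Hp). pose proof (Dp_pos p PI Hp).
      field. split; apply Rgt_not_eq; auto. }
  assert (HJ : is_RInt (fun t => gpf m t / Dp p t) 0 PI
    ((3 * m - m ^ 2 - 2) / 2 * (PI * p^n / (1 - p^2))
          + (3 * m + m ^ 2 + 2) / 2 * (PI * p^(S (S n)) / (1 - p^2)))).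
  { eapply is_RInt_ext.
    2: apply (is_RInt_lin _ _ 0 PI _ _ _ _ _ (Mk p Hp0 Hp n) (Mk p Hp0 Hp (S (S n))) eq_refl).
    intros t _. cbv beta.
    replace (INR (S (S n)) * t) with (m * t + t) by (unfold m; rewrite (S_INR (S n)); ring).
    replace (INR n * t) with (m * t - t) by (unfold m; rewrite (S_INR n); ring).
    rewrite cos_plus, cos_minus. unfold gpf. pose proof (Dp_pos p t Hp).
    generalize (Dp p t) H; intros D HD. match goal with |- ?a = ?b => change (@eq R a b) end. field. apply Rgt_not_eq; exact HD. }
  eapply is_RInt_ext.
  2: apply (is_RInt_lin _ _ 0 PI _ _ 1 (-p) _ HI HJ).
  - intros t _. cbv beta. match goal with |- ?a = ?b => change (@eq R a b) end. ring.
  - ring.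
Qed.

Lemma cont_bzero (u v : R -> R) x : (forall y, Rabs (u y) <= 1) -> continuous v x -> v x = 0 ->
  continuous (fun y => u y * v y) x.
Proof.
  intros Hu Hv Hx. unfold continuous in *.
  apply filterlim_locally. intro eps.
  pose proof (proj1 (filterlim_locally v (v x)) Hv eps) as H.
  eapply filter_imp. 2: exact H.
  intros y Hy. rewrite Hx in Hy. rewrite Hx, Rmult_0_r.
  unfold ball in *; simpl in *. unfold AbsRing_ball, abs, minus, plus, opp in *; simpl in *.
  rewrite Ropp_0, Rplus_0_r in *. rewrite Rabs_mult.
  specialize (Hu y). pose proof (Rabs_pos (v y)). pose proof (Rabs_pos (u y)). nra.
Qed.


Definition hfun n r s := sin (INR (n+1) * acos s) * (sqrt (1 - s^2) * sqrt (1 - s^2) / (s - r)^3).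

Lemma integrand_eq n r s : 1 < Rabs r -> integrand n r s = hfun n r s.
Proof.
  intros hr. unfold integrand, chebU, hfun.
  destruct (Rle_dec (s^2) 1) as [Hs|Hs].
  - assert (Hb : -1 <= s <= 1).
    { split; nra. }
    rewrite sin_acos by exact Hb.
    replace (1 - s²) with (1 - s^2) by (unfold Rsqr; ring).
    assert (Hw : 1 - s^2 = sqrt (1 - s^2) * sqrt (1 - s^2)) by (rewrite sqrt_sqrt; lra).
    assert (Hsr : s - r <> 0).
    { assert (Rabs s <= 1) by (apply Rabs_le; lra).
      intro E. replace r with s in hr by lra. lra. }
    set (w := sqrt (1 - s^2)) in *.
    destruct (Req_dec w 0) as [E|E].
    + rewrite E. unfold Rdiv. ring.
    + rewrite Hw. field. repeat split; try apply pow_nonzero; auto.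
  - rewrite (sqrt_neg_0 (1 - s^2)) by lra. unfold Rdiv. ring.
Qed.

Lemma v_cont r s : s <> r ->
  continuous (fun s => sqrt (1 - s^2) * sqrt (1 - s^2) / (s - r)^3) s.
Proof.
  intros Hsr.
  apply (continuous_mult (fun s => sqrt (1 - s^2) * sqrt (1 - s^2)) (fun s => / (s - r)^3)).
  - apply (continuous_mult (fun s => sqrt (1 - s^2)) (fun s => sqrt (1 - s^2)));
      apply continuous_sqrt_comp; apply (ex_derive_continuous (fun s => 1 - s^2)); auto_derive; auto.
  - apply continuous_Rinv_comp.
    + apply (ex_derive_continuous (fun s => (s - r)^3)); auto_derive; auto.
    + apply pow_nonzero. lra.
Qed.

Lemma acos_cont s : -1 < s < 1 -> continuous acos s.
Proof.
  intros Hs. apply continuity_pt_filterlim. apply derivable_continuous_pt. apply derivable_pt_acos; auto.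
Qed.

Lemma hfun_cont n r s : 1 < Rabs r -> -1 <= s <= 1 -> continuous (hfun n r) s.
Proof.
  intros hr Hs.
  assert (Hsr : s <> r).
  { assert (Rabs s <= 1) by (apply Rabs_le; lra).
    intro E. rewrite E in *. lra. }
  unfold hfun.
  destruct (Req_dec s 1) as [E|E]; [|destruct (Req_dec s (-1)) as [E'|E']].
  - apply (cont_bzero (fun s => sin (INR (n+1) * acos s))).
    + intro y. apply Rabs_le. apply SIN_bound.
    + apply v_cont; auto.
    + rewrite E. replace (1 - 1^2) with 0 by ring. rewrite sqrt_0. unfold Rdiv. ring.
  - apply (cont_bzero (fun s => sin (INR (n+1) * acos s))).
    + intro y. apply Rabs_le. apply SIN_bound.
    + apply v_cont; auto.
    + rewrite E'. replace (1 - (-1)^2) with 0 by ring. rewrite sqrt_0. unfold Rdiv. ring.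
  - apply (continuous_mult (fun s => sin (INR (n+1) * acos s))).
    + apply continuous_sin_comp.
      apply (continuous_mult (fun _ => INR (n+1)) acos).
      * apply continuous_const.
      * apply acos_cont. lra.
    + apply v_cont; auto.
Qed.

Lemma rho_facts r : 1 < Rabs r ->
  let p := r - Rabs r / r * sqrt (r^2 - 1) in
  p <> 0 /\ Rabs p < 1 /\ r = (p^2 + 1) / (2 * p) /\
  Rabs r / sqrt (r^2 - 1) = (1 + p^2) / (1 - p^2).
Proof.
  intros hr p.
  assert (Hr2 : 1 < r^2).
  { destruct (Rcase_abs r); [rewrite Rabs_left in hr | rewrite Rabs_right in hr]; auto; nra. }
  assert (Hq : 0 < sqrt (r^2 - 1)) by (apply sqrt_lt_R0; lra).
  assert (Hqq : sqrt (r^2 - 1) * sqrt (r^2 - 1) = r^2 - 1) by (apply sqrt_sqrt; lra).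
  set (q := sqrt (r^2 - 1)) in *.
  destruct (Rle_lt_dec 0 r) as [Hr|Hr].
  - rewrite Rabs_pos_eq in hr by lra.
    assert (Ep : p = r - q) by (unfold p; rewrite Rabs_pos_eq by lra; field; lra).
    clearbody p. rewrite (Rabs_pos_eq r) by lra.
    assert (H1 : q < r) by nra.
    assert (H2 : r - 1 < q) by nra.
    assert (Hp0 : 0 < p) by lra.
    assert (Hp1 : p < 1) by lra.
    assert (Hpp : p^2 - 2 * r * p + 1 = 0) by (rewrite Ep; nra).
    split; [lra|]. split; [rewrite Rabs_pos_eq; lra|]. split.
    + field_simplify_eq; [nra | lra].
    + assert (1 - p^2 <> 0) by nra. field_simplify_eq; [|split; lra].
      rewrite Ep. nra.
  - rewrite Rabs_left in hr by lra.
    assert (Ep : p = r + q) by (unfold p; rewrite Rabs_left by lra; field; lra).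
    clearbody p. rewrite (Rabs_left r) by lra.
    assert (H1 : q < - r) by nra.
    assert (H2 : - r - 1 < q) by nra.
    assert (Hp0 : p < 0) by lra.
    assert (Hp1 : -1 < p) by lra.
    assert (Hpp : p^2 - 2 * r * p + 1 = 0) by (rewrite Ep; nra).
    split; [lra|]. split; [rewrite Rabs_left; lra|]. split.
    + field_simplify_eq; [nra | lra].
    + assert (1 - p^2 <> 0) by nra. field_simplify_eq; [|split; lra].
      rewrite Ep. nra.
Qed.

Theorem mainTheorem12 (n : nat) (r : R) (hr : 1 < Rabs r) :
  ex_RInt (integrand n r) (-1) 1 /\
  RInt (integrand n r) (-1) 1 =
    PI / 2 *
      ((INR n ^ 2 + 2 * INR n + 3)
        - 3 * INR (n + 1) * (Rabs r / sqrt (r ^ 2 - 1)))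
    * (r - Rabs r / r * sqrt (r ^ 2 - 1)) ^ (n + 1).
Proof.
  assert (Efun : integrand n r = hfun n r).
  { apply FunctionalExtensionality.functional_extensionality. intro s. apply integrand_eq; auto. }
  rewrite Efun.
  pose proof (rho_facts r hr) as HF. cbv zeta in HF.
  set (p := r - Rabs r / r * sqrt (r^2 - 1)) in *.
  destruct HF as (Hp0 & Hp & Er & Eq).
  rewrite Eq. clearbody p.
  assert (Hex : ex_RInt (hfun n r) (-1) 1).
  { apply (@ex_RInt_continuous R_CompleteNormedModule (hfun n r)). intros z Hz. apply hfun_cont; auto.
    rewrite Rmin_left, Rmax_right in Hz by lra. auto. }
  split; auto.
  pose proof (Gint p n Hp0 Hp) as HG.
  set (V := - p * _) in HG.
  assert (HC := is_RInt_comp (hfun n r) cos (fun t => - sin t) 0 PI).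
  assert (HM : is_RInt (fun y => scal (- sin y) (hfun n r (cos y))) 0 PI (-1 * V)).
  { eapply is_RInt_ext. 2: exact (is_RInt_scal _ 0 PI (-1) V HG).
    intros y Hy. rewrite Rmin_left, Rmax_right in Hy by (pose proof PI_RGT_0; lra).
    unfold hfun, Gf. change (scal (-1) (sin (INR (S n) * y) * sin y ^ 3 / (cos y - (p ^ 2 + 1) / (2 * p)) ^ 3))
      with (-1 * (sin (INR (S n) * y) * sin y ^ 3 / (cos y - (p ^ 2 + 1) / (2 * p)) ^ 3)).
    change (scal (- sin y) (sin (INR (n + 1) * acos (cos y)) *
      (sqrt (1 - cos y ^ 2) * sqrt (1 - cos y ^ 2) / (cos y - r) ^ 3))) with
      (- sin y * (sin (INR (n + 1) * acos (cos y)) *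
      (sqrt (1 - cos y ^ 2) * sqrt (1 - cos y ^ 2) / (cos y - r) ^ 3))).
    rewrite acos_cos by lra.
    rewrite sqrt_sqrt by (pose proof (COS_bound y); nra).
    rewrite Nat.add_1_r. rewrite Er.
    pose proof (cosr_nz p y Hp0 Hp).
    replace (1 - cos y ^ 2) with (sin y ^ 2) by (pose proof (sin2_cos2 y); unfold Rsqr in *; nra).
    match goal with |- ?a = ?b => change (@eq R a b) end. field. split; auto. intro E. apply H. replace (cos y - (p^2+1)/(2*p)) with ((cos y*(2*p) - (p^2+1))/(2*p)) by (field; auto). rewrite E. unfold Rdiv. ring. }
  assert (HC' : is_RInt (fun y => scal (- sin y) (hfun n r (cos y))) 0 PI (RInt (hfun n r) (cos 0) (cos PI))).
  { apply HC.
    - intros x _. apply hfun_cont; auto. apply COS_bound.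
    - intros x _. split.
      + auto_derive; auto. ring.
      + apply (ex_derive_continuous (fun t => - sin t)). auto_derive. auto. }
  rewrite cos_0, cos_PI in HC'.
  pose proof (is_RInt_unique _ _ _ _ HC') as E1.
  pose proof (is_RInt_unique _ _ _ _ HM) as E2.
  pose proof (opp_RInt_swap (hfun n r) (-1) 1 Hex) as E3.
  assert (E4 : RInt (hfun n r) (-1) 1 = V).
  { change (opp (RInt (hfun n r) (-1) 1)) with (- (RInt (hfun n r) (-1) 1)) in E3.
    rewrite E1 in E2. rewrite <- E3 in E2. lra. }
  rewrite E4. unfold V.
  assert (Hq : 1 - p^2 <> 0).
  { destruct (Rabs_def2 _ _ Hp). intro. nra. }
  rewrite !S_INR, plus_INR. simpl INR. rewrite pow_add.
  change (p ^ S (S n)) with (p * (p * p ^ n)).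
  match goal with |- ?a = ?b => change (@eq R a b) end. field. auto.
Qed.
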